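(* Let $\langle \mathscr{A} \mid \mathscr{R} \rangle$ be a monoid presentation satisfying $C(2)$, and let $a \in \mathscr{A}$. Then $a$ is either indecomposable or redundant.
   Context: A monoid presentation $\langle \mathscr{A} \mid \mathscr{R} \rangle$ consists of an alphabet $\mathscr{A}$ and a set $\mathscr{R} \subseteq \mathscr{A}^* \times \mathscr{A}^*$ of relations; $\equiv_\mathscr{R}$ is the smallest congruence on $\mathscr{A}^*$ containing $\mathscr{R}$, $[u]$ denotes the class of $u$, and the monoid presented is $\mathscr{A}^*/\equiv_\mathscr{R}$. A relation word is a word occurring as one side of a relation in $\mathscr{R}$. A piece is a word which occurs as a factor of two distinct relation words, or in two different (possibly overlapping) positions within one relation word; the empty word is always a piece. The presentation is $C(n)$ ($n$ a positive integer) if no relation word can be written as a product of strictly fewer than $n$ pieces. A generator $a \in \mathscr{A}$ is redundant if $a$ is $\equiv_\mathscr{R}$-equivalent to a product of zero or more generators other than $a$ (equivalently, the monoid presented is generated by the classes of the letters in $\mathscr{A} \setminus \{a\}$). A non-identity element $s$ of a monoid is indecomposable if whenever $xy = s$ we have $x = 1$ or $y = 1$; a generator $a$ is indecomposable if $[a]$ is indecomposable. *)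

(* Defs.v *)
From Stdlib Require Import List.
Import ListNotations.
Set Implicit Arguments.

Section Presentation.
Variable A : Type.
Variable R : list A -> list A -> Prop.

Inductive congR : list A -> list A -> Prop :=
| congR_rel : forall u v, R u v -> congR u v
| congR_refl : forall u, congR u u
| congR_sym : forall u v, congR u v -> congR v u
| congR_trans : forall u v w, congR u v -> congR v w -> congR u w
| congR_ctx : forall x y u v, congR u v -> congR (x ++ u ++ y) (x ++ v ++ y).

Definition relation_word (r : list A) : Prop :=
  exists s, R r s \/ R s r.

Definition piece (p : list A) : Prop :=
  p = [] \/
  exists r1 r2 x1 y1 x2 y2,
    relation_word r1 /\ relation_word r2 /\
    r1 = x1 ++ p ++ y1 /\ r2 = x2 ++ p ++ y2 /\
    (r1 <> r2 \/ length x1 <> length x2).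

Definition small_cancellation (n : nat) : Prop :=
  forall r, relation_word r ->
  forall ps : list (list A), length ps < n ->
    (forall p, In p ps -> piece p) -> r <> concat ps.

Definition redundant (a : A) : Prop :=
  exists w : list A, ~ In a w /\ congR [a] w.

(* a is indecomposable: [a] is not the identity, and whenever [x][y] = [a]
   then [x] = 1 or [y] = 1 (every monoid element is a class [x]). *)
Definition indecomposable (a : A) : Prop :=
  ~ congR [a] [] /\
  forall x y : list A, congR (x ++ y) [a] -> congR x [] \/ congR y [].
End Presentation.

(* Main.v *)
Require Import Defs.
From Stdlib Require Import List Classical.
Import ListNotations.

Section P.
Variable A : Type.
Variable R : list A -> list A -> Prop.
Variable a : A.
Hypothesis HC : small_cancellation R 2.
Hypothesis HN : ~ redundant R a.

Lemma rw_nonnil r : relation_word R r -> r <> [].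
Proof.
  intros Hr E. apply (HC _ Hr []); simpl; auto. contradiction.
Qed.

Lemma rw_a r : relation_word R [a] -> relation_word R r -> In a r -> r = [a].
Proof.
  intros H1 H2 Hin. destruct (classic (r = [a])) as [E|E]; auto.
  exfalso. apply (HC _ H1 [[a]]); simpl; auto.
  intros p [<-|[]]. right.
  destruct (in_split _ _ Hin) as [l1 [l2 El]].
  exists [a], r, [], [], l1, l2. repeat split; auto.
Qed.

Lemma rel_inv u v : R u v ->
  (u = [a] -> v = [a]) /\ (v = [a] -> u = [a]) /\ u <> [] /\ v <> [].
Proof.
  intros H.
  assert (Hu : relation_word R u) by (exists v; left; auto).
  assert (Hv : relation_word R v) by (exists u; right; auto).
  repeat split.
  - intros ->. apply rw_a; auto.
    destruct (classic (In a v)) as [I|I]; auto.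
    exfalso; apply HN. exists v; split; auto. now apply congR_rel.
  - intros ->. apply rw_a; auto.
    destruct (classic (In a u)) as [I|I]; auto.
    exfalso; apply HN. exists u; split; auto. apply congR_sym. now apply congR_rel.
  - now apply rw_nonnil.
  - now apply rw_nonnil.
Qed.

Lemma inv u v : congR R u v ->
  (u = [a] -> v = [a]) /\ (v = [a] -> u = [a]) /\
  (u = [] -> v = []) /\ (v = [] -> u = []).
Proof.
  induction 1 as [u v H|u|u v H IH|u v w H1 IH1 H2 IH2|x y u v H IH].
  - destruct (rel_inv _ _ H) as [h1 [h2 [h3 h4]]]. repeat split; tauto.
  - tauto.
  - tauto.
  - tauto.
  - destruct IH as [h1 [h2 [h3 h4]]].
    assert (K : forall u v, (u = [a] -> v = [a]) -> (u = [] -> v = []) ->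
              (x ++ u ++ y = [a] -> x ++ v ++ y = [a]) /\
              (x ++ u ++ y = [] -> x ++ v ++ y = [])).
    { clear. intros u v g1 g2. split.
      - intros E. apply app_eq_unit in E as [[-> E]|[-> E]].
        + apply app_eq_unit in E as [[-> ->]|[-> ->]].
          * rewrite (g2 eq_refl); reflexivity.
          * rewrite (g1 eq_refl); reflexivity.
        + apply app_eq_nil in E as [-> ->]. rewrite (g2 eq_refl); reflexivity.
      - intros E. apply app_eq_nil in E as [-> E]. apply app_eq_nil in E as [-> ->].
        rewrite (g2 eq_refl); reflexivity. }
    destruct (K u v h1 h3), (K v u h2 h4). tauto.
Qed.
End P.

Theorem proposition5 (A : Type) (R : list A -> list A -> Prop) (a : A) :
  small_cancellation R 2 -> indecomposable R a \/ redundant R a.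
Proof.
  intros HC. destruct (classic (redundant R a)) as [H|H]; [now right|left].
  split.
  - intros E. destruct (inv _ _ _ HC H _ _ E) as [h _]. discriminate (h eq_refl).
  - intros x y E. destruct (inv _ _ _ HC H _ _ E) as [_ [h _]].
    specialize (h eq_refl). apply app_eq_unit in h as [[-> _]|[_ ->]]; [left|right]; apply congR_refl.
Qed.
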